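(* (a) For every integer $k \geq 10$, if $|q - q_k| \leq q_k^{-2k-6}$ then $q \in \mathcal{B}_3$. (b) If $0 < q - q_9 \leq q_9^{-24}$ then $q \in \mathcal{B}_3$.
   Context: For $q \in (1,2)$ let $I_q = [0, \frac{1}{q-1}]$. A sequence $(\epsilon_j)_{j\ge1} \in \{0,1\}^\mathbb{N}$ is a base $q$ expansion of $x$ if $x = \sum_{j\ge1} \epsilon_j q^{-j}$; let $\Sigma_q(x)$ be the set of base $q$ expansions of $x$. Let $\mathcal{U}_q^{(3)} = \{x \in I_q : |\Sigma_q(x)| = 3\}$ and $\mathcal{B}_3 = \{q \in (1,2) : \mathcal{U}_q^{(3)} \neq \emptyset\}$. For $k \geq 2$, the $k$-Bonacci number $q_k$ is the unique root in $(1,2)$ of $x^k - x^{k-1} - \cdots - x - 1 = 0$. *)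

(* Defs.v *)
From Stdlib Require Import Reals Lra.
Open Scope R_scope.

(* Digit sequence eps : nat -> bool, where eps j encodes epsilon_{j+1}. *)
Definition digit (b : bool) : R := if b then 1 else 0.

Definition is_expansion (q x : R) (eps : nat -> bool) : Prop :=
  infinite_sum (fun j => digit (eps j) / q ^ (S j)) x.

Definition in_Iq (q x : R) : Prop := 0 <= x <= 1 / (q - 1).

Definition has_exactly_three_expansions (q x : R) : Prop :=
  exists e1 e2 e3 : nat -> bool,
    is_expansion q x e1 /\ is_expansion q x e2 /\ is_expansion q x e3 /\
    e1 <> e2 /\ e1 <> e3 /\ e2 <> e3 /\
    (forall e, is_expansion q x e -> e = e1 \/ e = e2 \/ e = e3).

(* U_q^(3) nonempty *)
Definition in_B3 (q : R) : Prop :=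
  1 < q < 2 /\ exists x, in_Iq q x /\ has_exactly_three_expansions q x.

Definition is_kbonacci (k : nat) (r : R) : Prop :=
  1 < r < 2 /\ r ^ k = sum_f_R0 (fun i => r ^ i) (k - 1).

(* Main.v *)
Require Import Defs.
From Stdlib Require Import Reals Lra Lia Psatz FunctionalExtensionality ClassicalEpsilon Classical List.
Import ListNotations.
Open Scope R_scope.

Definition Tq (q y : R) : R := if Rlt_dec y (/q) then q*y else q*y - 1.
Fixpoint it (q : R) (n : nat) (y : R) : R :=
  match n with O => y | S n' => it q n' (Tq q y) end.
Definition dig (q y : R) : bool := if Rlt_dec y (/q) then false else true.
Definition Dq (q y : R) (n : nat) : bool := dig q (it q n y).
Definition inS (q y : R) : Prop := /q <= y <= /(q*(q-1)).
Definition inI (q y : R) : Prop := 0 <= y <= /(q-1).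
Definition consb (b : bool) (f : nat -> bool) (n : nat) : bool :=
  match n with O => b | S m => f m end.

Lemma Tq_digit q y : Tq q y = q*y - digit (dig q y).
Proof. unfold Tq, dig, digit. destruct (Rlt_dec y (/q)); lra. Qed.

Lemma it_add q m n y : it q (m + n) y = it q n (it q m y).
Proof. revert y; induction m; intros y; simpl; auto. Qed.

Lemma it_S_r q n y : it q (S n) y = Tq q (it q n y).
Proof. replace (S n) with (n + 1)%nat by lia. rewrite it_add. reflexivity. Qed.

Lemma Un_cv_ext u v l : (forall n, u n = v n) -> Un_cv u l -> Un_cv v l.
Proof. intros H Hu eps He. destruct (Hu eps He) as [N HN]. exists N. intros n Hn.
  rewrite <- H. auto. Qed.

Lemma Un_cv_const c : Un_cv (fun _ => c) c.
Proof. intros eps He. exists O. intros n _. unfold Rdist. rewrite Rminus_diag, Rabs_R0. lra. Qed.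

Lemma sum_shift f n : sum_f_R0 f (S n) = f O + sum_f_R0 (fun j => f (S j)) n.
Proof. induction n; simpl in *; [ring|]. rewrite IHn. ring. Qed.

Lemma sum_scal f c n : sum_f_R0 (fun j => c * f j) n = c * sum_f_R0 f n.
Proof. induction n; simpl; [ring|]. rewrite IHn. ring. Qed.

Definition term (q : R) (e : nat -> bool) (j : nat) : R := digit (e j) / q ^ (S j).

Lemma exp_ext q x e e' : is_expansion q x e -> (forall n, e n = e' n) -> is_expansion q x e'.
Proof. unfold is_expansion. intros H He.
  eapply Un_cv_ext; [|exact H]. intros n. apply sum_eq. intros i _. rewrite He. reflexivity. Qed.

Lemma exp_tail q x e : 0 < q -> is_expansion q x e ->
  is_expansion q (q*x - digit (e O)) (fun j => e (S j)).
Proof. intros Hq H. unfold is_expansion in *.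
  assert (H1 : Un_cv (fun n => sum_f_R0 (fun j => digit (e j) / q ^ S j) (n + 1)) x).
  { apply CV_shift'. exact H. }
  assert (H2 := CV_minus _ _ _ _ (CV_mult _ _ _ _ (Un_cv_const q) H1) (Un_cv_const (digit (e O)))).
  eapply Un_cv_ext; [|exact H2]. intros n. cbv beta.
  rewrite Nat.add_1_r, sum_shift.
  assert (Hs: sum_f_R0 (fun j => q * (digit (e (S j)) / q ^ S (S j))) n =
              sum_f_R0 (fun j => digit (e (S j)) / q ^ S j) n).
  { apply sum_eq. intros i _. simpl. field. split; [apply pow_nonzero|]; lra. }
  rewrite <- Hs, sum_scal. field. lra.
Qed.

Lemma exp_cons q y f b : 0 < q -> is_expansion q y f ->
  is_expansion q ((digit b + y)/q) (consb b f).
Proof. intros Hq H. unfold is_expansion in *.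
  apply CV_shift with (k := 1%nat).
  replace ((digit b + y)/q) with (digit b / q + /q*y) by (field; lra).
  assert (H2 := CV_plus _ _ _ _ (Un_cv_const (digit b / q)) (CV_mult _ _ _ _ (Un_cv_const (/q)) H)).
  eapply Un_cv_ext; [|exact H2]. intros n. cbv beta.
  rewrite Nat.add_1_r, sum_shift. cbv beta. unfold consb.
  rewrite <- sum_scal. f_equal; [field; lra|].
  apply sum_eq. intros i _. simpl. field. split; [apply pow_nonzero|]; lra.
Qed.

Lemma sum_geom q n : 1 < q -> sum_f_R0 (fun j => / q ^ S j) n = (1 - / q ^ S n) / (q - 1).
Proof. intros Hq. induction n; simpl in *.
  - field. lra.
  - rewrite IHn. field. split; [apply pow_nonzero|]; lra.
Qed.

Lemma exp_bounds q x e : 1 < q -> is_expansion q x e -> 0 <= x <= / (q - 1).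
Proof. intros Hq H. unfold is_expansion in H. split.
  - eapply Rle_cv_lim; [|apply (Un_cv_const 0)|exact H].
    intros n. apply cond_pos_sum. intros j. unfold digit. destruct (e j).
    + apply Rlt_le, Rdiv_lt_0_compat; [lra|apply pow_lt; lra].
    + unfold Rdiv; rewrite Rmult_0_l; lra.
  - eapply Rle_cv_lim; [|exact H|apply (Un_cv_const (/(q-1)))].
    intros n. apply Rle_trans with (sum_f_R0 (fun j => / q ^ S j) n).
    + apply sum_Rle. intros j _. unfold digit. destruct (e j).
      * unfold Rdiv; lra.
      * unfold Rdiv. rewrite Rmult_0_l. apply Rlt_le, Rinv_0_lt_compat, pow_lt; lra.
    + rewrite sum_geom by lra. unfold Rdiv.
      assert (0 < / q ^ S n) by (apply Rinv_0_lt_compat, pow_lt; lra).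
      assert (0 < / (q-1)) by (apply Rinv_0_lt_compat; lra).
      rewrite <- (Rmult_1_l (/(q-1))) at 2. apply Rmult_le_compat_r; lra.
Qed.

Lemma inv_le_iff q x : 0 < q -> (/q <= x <-> 1 <= q * x).
Proof. intros Hq. assert (q * /q = 1) by (field; lra). split; intros H'; nra. Qed.
Lemma inv_lt_iff q x : 0 < q -> (x < /q <-> q * x < 1).
Proof. intros Hq. assert (q * /q = 1) by (field; lra). split; intros H'; nra. Qed.

Lemma exp_first q x e : 1 < q -> is_expansion q x e ->
  (e O = true -> /q <= x) /\ (e O = false -> x <= /(q*(q-1))).
Proof. intros Hq H. pose proof (exp_bounds _ _ _ Hq (exp_tail q x e ltac:(lra) H)) as [H1 H2].
  split; intros He; rewrite He in H1, H2; unfold digit in H1, H2.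
  - apply inv_le_iff; lra.
  - rewrite Rinv_mult. replace x with (/q * (q*x - 0)) by (field; lra).
    apply Rmult_le_compat_l; [apply Rlt_le, Rinv_0_lt_compat; lra| lra].
Qed.

Lemma first_digit q x e : 1 < q -> ~ inS q x -> is_expansion q x e -> e O = dig q x.
Proof. intros Hq HS H. destruct (exp_first _ _ _ Hq H) as [H1 H2]. unfold dig.
  destruct (e O) eqn:E; destruct (Rlt_dec x (/q)); auto.
  - specialize (H1 eq_refl). lra.
  - exfalso. apply HS. split; [lra| apply H2; auto].
Qed.

Lemma inv_qm1_ge1 q : 1 < q <= 2 -> 1 <= /(q-1).
Proof. intros Hq. assert ((q-1) * /(q-1) = 1) by (field; lra). nra. Qed.

Lemma T_I q y : 1 < q <= 2 -> inI q y -> inI q (Tq q y).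
Proof. intros Hq [H1 H2]. unfold inI, Tq. pose proof (inv_qm1_ge1 q Hq).
  assert (q * /q = 1) by (field; lra). assert ((q-1) * /(q-1) = 1) by (field; lra).
  destruct (Rlt_dec y (/q)) as [h|h].
  - apply inv_lt_iff in h; [|lra]. split; nra.
  - apply Rnot_lt_le, inv_le_iff in h; [|lra].
    assert (q * (/(q-1) - y) >= 0) by (apply Rle_ge, Rmult_le_pos; lra).
    split; nra.
Qed.

Lemma it_I q n y : 1 < q <= 2 -> inI q y -> inI q (it q n y).
Proof. intros Hq. revert y. induction n; intros y Hy; simpl; auto. apply IHn, T_I; auto. Qed.

Lemma partial_sum q y n : 0 < q ->
  sum_f_R0 (term q (Dq q y)) n = y - it q (S n) y / q ^ (S n).
Proof. intros Hq. induction n.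
  - simpl. unfold term, Dq. simpl. rewrite Tq_digit. field. lra.
  - rewrite tech5, IHn. unfold term, Dq. rewrite (it_S_r q (S n) y), Tq_digit.
    simpl. field. split; [apply pow_nonzero|]; lra.
Qed.

Lemma exp_exists q y : 1 < q <= 2 -> inI q y -> is_expansion q y (Dq q y).
Proof. intros Hq Hy. unfold is_expansion. intros eps He.
  assert (Hq1 : 0 < q - 1) by lra.
  destruct (pow_lt_1_zero (/q)) with (y := eps * (q-1)) as [N HN].
  { rewrite Rabs_pos_eq. rewrite <- Rinv_1. apply Rinv_lt_contravar; lra. apply Rlt_le, Rinv_0_lt_compat; lra. }
  { nra. }
  exists N. intros n Hn. unfold Rdist.
  change (fun j => digit (Dq q y j) / q ^ S j) with (term q (Dq q y)).
  rewrite partial_sum by lra.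
  destruct (it_I q (S n) y Hq Hy) as [I1 I2].
  assert (HN' := HN (S n) ltac:(lia)). rewrite Rabs_pos_eq in HN' by (apply pow_le, Rlt_le, Rinv_0_lt_compat; lra).
  rewrite pow_inv in HN'.
  assert (Hp : 0 < / q ^ S n) by (apply Rinv_0_lt_compat, pow_lt; lra).
  replace (y - it q (S n) y / q ^ S n - y) with (- (it q (S n) y * / q ^ S n)) by (unfold Rdiv; ring).
  rewrite Rabs_Ropp, Rabs_pos_eq by nra.
  assert ((q-1) * /(q-1) = 1) by (field; lra).
  assert (it q (S n) y * (q-1) <= 1) by nra.
  nra.
Qed.

Lemma exp_prefix_unique q : 1 < q <= 2 -> forall m y e, inI q y ->
  (forall j, (j < m)%nat -> ~ inS q (it q j y)) -> is_expansion q y e ->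
  (forall j, (j < m)%nat -> e j = Dq q y j) /\ is_expansion q (it q m y) (fun j => e (m + j)%nat).
Proof. intros Hq. induction m; intros y e Hy HS H.
  - split; [intros; lia|]. simpl. exact H.
  - assert (H0 : e O = dig q y) by (apply first_digit; [lra|apply (HS O); lia|auto]).
    assert (Ht := exp_tail q y e ltac:(lra) H). rewrite H0, <- Tq_digit in Ht.
    destruct (IHm (Tq q y) (fun j => e (S j)) (T_I q y Hq Hy)) as [IH1 IH2].
    { intros j Hj. apply (HS (S j)); lia. }
    { exact Ht. }
    split.
    + intros j Hj. destruct j; [exact H0|]. apply (IH1 j); lia.
    + exact IH2.
Qed.

Lemma exp_unique q y e : 1 < q <= 2 -> inI q y -> (forall n, ~ inS q (it q n y)) ->
  is_expansion q y e -> e = Dq q y.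
Proof. intros Hq Hy HS H. apply functional_extensionality. intros n.
  destruct (exp_prefix_unique q Hq (S n) y e Hy (fun j _ => HS j) H) as [H1 _]. apply H1; lia. Qed.

Lemma exp_prefix_build q : 0 < q -> forall m y f, is_expansion q (it q m y) f ->
  is_expansion q y (fun j => if (j <? m)%nat then Dq q y j else f (j - m)%nat).
Proof. intros Hq. induction m; intros y f H.
  - eapply exp_ext; [exact H|]. intros n. simpl. rewrite Nat.sub_0_r. reflexivity.
  - simpl in H. specialize (IHm _ _ H).
    assert (Hc := exp_cons _ _ _ (dig q y) Hq IHm).
    replace ((digit (dig q y) + Tq q y) / q) with y in Hc by (rewrite Tq_digit; field; lra).
    eapply exp_ext; [exact Hc|]. intros n. destruct n; reflexivity.
Qed.

Definition Lw : R := 1/50.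
Definition sq (q : R) : R := /(q*(q-1)) - /q.

Lemma inS_dec q y : {inS q y} + {~ inS q y}.
Proof. unfold inS. destruct (Rle_dec (/q) y); destruct (Rle_dec y (/(q*(q-1)))); 
  [left; auto| right; intros [? ?]; auto | right; intros [? ?]; auto | right; intros [? ?]; auto]. Qed.

Lemma iq_le_ir q : 1 < q <= 2 -> /q <= /(q*(q-1)).
Proof. intros Hq. apply Rinv_le_contravar; nra. Qed.

Lemma side q A c t0 t1 t : 1 < q <= 2 -> 0 < c ->
  (forall t, t0 <= t <= t1 -> ~ inS q (A + c*(t-t0))) -> A < /q -> t0 <= t <= t1 ->
  A + c*(t - t0) < /q.
Proof. intros Hq Hc H HA Ht. destruct (Rlt_dec (A + c*(t-t0)) (/q)) as [h|h]; auto. exfalso.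
  set (ts := t0 + (/q - A)/c).
  assert (E : A + c*(ts - t0) = /q) by (unfold ts; field; lra).
  assert (t0 <= ts <= t1).
  { unfold ts. split.
    - assert (0 < (/q - A)/c) by (apply Rdiv_lt_0_compat; lra). lra.
    - assert ((/q - A)/c <= t - t0).
      { apply (Rmult_le_reg_r c); [lra|]. unfold Rdiv. rewrite Rmult_assoc, Rinv_l by lra. lra. }
      lra. }
  apply (H ts); auto. rewrite E. split; [lra|apply iq_le_ir; auto].
Qed.

Lemma aff_it q n w t0 t1 : 1 < q <= 2 ->
  (forall t, t0 <= t <= t1 -> forall j, (j < n)%nat -> ~ inS q (it q j (w + t))) ->
  forall t, t0 <= t <= t1 -> it q n (w + t) = it q n (w + t0) + q^n * (t - t0).
Proof. intros Hq. induction n; intros H t Ht.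
  - simpl. ring.
  - assert (IH : forall t, t0 <= t <= t1 -> it q n (w + t) = it q n (w + t0) + q^n * (t - t0)).
    { apply IHn. intros; apply H; auto; lia. }
    assert (Hn : forall t, t0 <= t <= t1 -> ~ inS q (it q n (w + t0) + q^n * (t - t0))).
    { intros t' Ht'. rewrite <- IH by auto. apply H; auto. }
    assert (Hpos : 0 < q^n) by (apply pow_lt; lra).
    assert (Ht0 : t0 <= t0 <= t1) by lra.
    rewrite !it_S_r, IH, (IH t0) by auto. unfold Tq.
    set (A := it q n (w + t0)) in *.
    destruct (Rlt_dec A (/q)) as [h|h].
    + pose proof (side q A (q^n) t0 t1 t Hq Hpos Hn h Ht) as h2.
      replace (A + q^n*(t0-t0)) with A by ring.
      destruct (Rlt_dec (A + q^n*(t-t0)) (/q)); [|lra].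
      destruct (Rlt_dec A (/q)); [|lra]. simpl. ring.
    + replace (A + q^n*(t0-t0)) with A by ring.
      assert (0 <= q^n*(t-t0)) by (apply Rmult_le_pos; lra).
      destruct (Rlt_dec (A + q^n*(t-t0)) (/q)); [lra|].
      destruct (Rlt_dec A (/q)); [lra|]. simpl. ring.
Qed.

Section QR.
Variable q : R.
Hypothesis Hq : 1995/1000 <= q < 2.

Lemma qb1 : 1 < q <= 2. Proof. lra. Qed.
Lemma qiq : q * /q = 1. Proof. field. lra. Qed.
Lemma qir : q*(q-1) * /(q*(q-1)) = 1. Proof. field. lra. Qed.
Lemma iq_b : 1/2 <= /q <= 1000/1995.
Proof. pose proof qiq. split; nra. Qed.
Lemma ir_b : 1/2 <= /(q*(q-1)) <= 10000/19850.
Proof. pose proof qir. assert (1995*995/1000000 <= q*(q-1) < 2) by nra. split; nra. Qed.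
Lemma s_b : 0 <= sq q <= 1/396.
Proof. unfold sq. pose proof qiq; pose proof qir. rewrite Rinv_mult.
  assert (0 < /q) by (apply Rinv_0_lt_compat; lra).
  assert ((q-1) * /(q-1) = 1) by (field; lra).
  assert (1 <= /(q-1) <= 1000/995) by (split; nra).
  replace (/q * /(q-1) - /q) with (/q * (/(q-1) - 1)) by ring.
  pose proof iq_b. split; nra.
Qed.

Lemma ret (y d : R) : ~ inS q y -> /q - d <= y <= /(q*(q-1)) + d -> 0 <= d <= 2/25 ->
  ~ inS q (Tq q y) /\ ~ inS q (Tq q (Tq q y)).
Proof. intros HS Hy Hd. pose proof qiq; pose proof qir; pose proof iq_b; pose proof ir_b.
  unfold inS in *. unfold Tq.
  destruct (Rlt_dec y (/q)) as [h|h].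
  - assert (q*y >= 1 - q*d) by nra.
    assert (q*y > /(q*(q-1))) by nra.
    destruct (Rlt_dec (q*y) (/q)); [lra|].
    assert (q*(q*y) - 1 > /(q*(q-1))) by nra.
    split; intros [? ?]; lra.
  - assert (y > /(q*(q-1))) by (apply Rnot_lt_le in h; destruct (Rle_lt_dec y (/(q*(q-1)))); [exfalso; apply HS; lra| lra]).
    assert (q*y - 1 <= q * /(q*(q-1)) - 1 + q*d) by nra.
    assert (q * /(q*(q-1)) - 1 <= 1/99) by nra.
    assert (q*y - 1 < /q) by nra.
    destruct (Rlt_dec (q*y-1) (/q)); [|lra].
    assert (q*(q*y-1) < /q) by nra.
    split; intros [? ?]; lra.
Qed.
End QR.

Lemma s_pos q : 1 < q < 2 -> 0 < sq q.
Proof. intros Hq. unfold sq. assert (/q < /(q*(q-1))) by (apply Rinv_lt_contravar; [apply Rmult_lt_0_compat; [apply Rmult_lt_0_compat|]; lra | nra]). lra. Qed.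

Lemma lvl_out q a c b t : 1995/1000 <= q < 2 -> 3/2 <= c -> b = (/q - a)/c - sq q / 4 ->
  (t <= b \/ b + sq q <= t) -> ~ inS q (a + c*t).
Proof. intros Hq Hc Hb Ht. pose proof (s_pos q ltac:(lra)) as Hs.
  assert (Hcb : c * b = /q - a - c * sq q / 4) by (rewrite Hb; field; lra).
  unfold inS. intros [H1 H2]. destruct Ht as [Ht|Ht].
  - assert (c*t <= c*b) by (apply Rmult_le_compat_l; lra).
    assert (0 < c * sq q) by (apply Rmult_lt_0_compat; lra). lra.
  - assert (c*(b + sq q) <= c*t) by (apply Rmult_le_compat_l; lra).
    assert (0 < (c - 4/3) * sq q) by (apply Rmult_lt_0_compat; lra).
    unfold sq in *. lra.
Qed.

Lemma lvl_nohit q a c : 1 < q <= 2 -> 0 <= c ->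
  ~ (a <= /(q*(q-1)) /\ /q <= a + c * Lw) -> forall t, 0 <= t <= Lw -> ~ inS q (a + c*t).
Proof. intros Hq Hc H t Ht [H1 H2]. apply H. split.
  - assert (0 <= c*t) by (apply Rmult_le_pos; lra). lra.
  - assert (c*t <= c*Lw) by (apply Rmult_le_compat_l; lra). lra.
Qed.

Lemma pow_ge q n : 1 <= q -> 1 <= q^n.
Proof. intros. induction n; simpl; nra. Qed.

Lemma fam q v : 1995/1000 <= q < 2 ->
  (forall t, 0 <= t <= Lw -> inI q (v+t) /\ ~ inS q (v+t)) ->
  exists b, forall t, 0 <= t <= Lw -> (t <= b \/ b + sq q <= t) ->
    ~ inS q (it q 1 (v+t)) /\ ~ inS q (it q 2 (v+t)) /\ ~ inS q (it q 3 (v+t)).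
Proof. intros Hq H. pose proof (qb1 q Hq) as Hq1. unfold Lw in *.
  assert (E1 : forall t, 0 <= t <= 1/50 -> it q 1 (v+t) = it q 1 (v+0) + q^1 * (t - 0)).
  { apply aff_it; auto. intros t Ht j Hj. replace j with O by lia. apply H; auto. }
  set (a1 := it q 1 (v+0)) in *.
  assert (Hq2 : 3/2 <= q^2) by (simpl; nra).
  assert (Hq3 : 3/2 <= q^3) by (simpl; nra).
  assert (Hq1' : 3/2 <= q^1) by (simpl; nra).
  assert (Hb2 : q^2 <= 4) by (simpl; nra).
  destruct (classic (a1 <= /(q*(q-1)) /\ /q <= a1 + q^1 * (1/50))) as [h1|h1].
  - exists ((/q - a1)/q^1 - sq q/4). intros t Ht Hout.
    assert (N1 : ~ inS q (it q 1 (v+t))).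
    { rewrite E1 by auto. replace (t - 0) with t by ring. eapply lvl_out; eauto. }
    assert (R := ret q Hq (it q 1 (v+t)) (q^1 * (1/50)) N1).
    rewrite <- !it_S_r in R. split; [auto|]. apply R.
    + rewrite E1 by auto. assert (q^1 * t <= q^1*(1/50)) by (apply Rmult_le_compat_l; lra).
      assert (0 <= q^1*t) by (apply Rmult_le_pos; lra). lra.
    + split; [apply Rmult_le_pos; lra|]. simpl; lra.
  - assert (N1 : forall t, 0 <= t <= 1/50 -> ~ inS q (it q 1 (v+t))).
    { intros t Ht. rewrite E1 by auto. replace (t-0) with t by ring. apply lvl_nohit; auto. lra. }
    assert (E2 : forall t, 0 <= t <= 1/50 -> it q 2 (v+t) = it q 2 (v+0) + q^2 * (t - 0)).
    { apply aff_it; auto. intros t Ht j Hj. destruct j as [|[|j]]; try lia. apply H; auto. apply N1; auto. }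
    set (a2 := it q 2 (v+0)) in *.
    destruct (classic (a2 <= /(q*(q-1)) /\ /q <= a2 + q^2 * (1/50))) as [h2|h2].
    + exists ((/q - a2)/q^2 - sq q/4). intros t Ht Hout.
      assert (N2 : ~ inS q (it q 2 (v+t))).
      { rewrite E2 by auto. replace (t - 0) with t by ring. eapply lvl_out; eauto. }
      assert (R := ret q Hq (it q 2 (v+t)) (q^2 * (1/50)) N2).
      rewrite <- !it_S_r in R. split; [auto|]. split; [auto|]. apply R.
      * rewrite E2 by auto. assert (q^2 * t <= q^2*(1/50)) by (apply Rmult_le_compat_l; lra).
        assert (0 <= q^2*t) by (apply Rmult_le_pos; lra). lra.
      * split; [apply Rmult_le_pos; lra|]. lra.
    + assert (N2 : forall t, 0 <= t <= 1/50 -> ~ inS q (it q 2 (v+t))).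
      { intros t Ht. rewrite E2 by auto. replace (t-0) with t by ring. apply lvl_nohit; auto. lra. }
      assert (E3 : forall t, 0 <= t <= 1/50 -> it q 3 (v+t) = it q 3 (v+0) + q^3 * (t - 0)).
      { apply aff_it; auto. intros t Ht j Hj. destruct j as [|[|[|j]]]; try lia.
        apply H; auto. apply N1; auto. apply N2; auto. }
      set (a3 := it q 3 (v+0)) in *.
      destruct (classic (a3 <= /(q*(q-1)) /\ /q <= a3 + q^3 * (1/50))) as [h3|h3].
      * exists ((/q - a3)/q^3 - sq q/4). intros t Ht Hout. split; [auto|]. split; [auto|].
        rewrite E3 by auto. replace (t - 0) with t by ring. eapply lvl_out; eauto.
      * exists (-1). intros t Ht _. split; [auto|]. split; [auto|].
        rewrite E3 by auto. replace (t-0) with t by ring. apply lvl_nohit; auto. lra.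
Qed.

Lemma pigeon (l w : R) : 0 <= l -> 0 <= w -> forall n (bs : list R), length bs = n ->
  forall A B, INR (S n) * l + INR n * w <= B - A ->
  exists o, A <= o /\ o + l <= B /\ forall b, In b bs -> (o + l <= b \/ b + w <= o).
Proof. intros Hl Hw. induction n; intros bs Hlen A B HB.
  - destruct bs; [|simpl in Hlen; lia]. exists A. simpl in HB. split; [lra|]. split; [lra|].
    intros b [].
  - destruct (classic (exists b, In b bs /\ b < A + l /\ A < b + w)) as [[b0 [Hin [h1 h2]]]|hn].
    + destruct (in_split _ _ Hin) as [l1 [l2 E]]. subst bs.
      destruct (IHn (l1 ++ l2)) with (A := b0 + w) (B := B) as [o [Ho1 [Ho2 Ho3]]].
      { rewrite length_app in *. simpl in Hlen. lia. }
      { rewrite !S_INR in HB. rewrite S_INR. lra. }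
      exists o. split; [lra|]. split; [lra|]. intros b Hb.
      apply in_app_or in Hb. destruct Hb as [Hb|[Hb|Hb]].
      * apply Ho3, in_or_app; auto.
      * subst b. right. lra.
      * apply Ho3, in_or_app; auto.
    + exists A. assert (0 <= INR (S n) * l + INR (S n) * w).
      { apply Rplus_le_le_0_compat; apply Rmult_le_pos; auto; apply pos_INR. }
      rewrite (S_INR (S n)) in HB. split; [lra|]. split; [lra|].
      intros b Hb. destruct (Rlt_dec b (A + l)); [|left; lra].
      destruct (Rlt_dec A (b + w)); [|right; lra]. exfalso. apply hn. exists b. auto.
Qed.

Lemma turn q v1 v2 v3 : 1995/1000 <= q < 2 ->
  (forall v, (v = v1 \/ v = v2 \/ v = v3) -> forall t, 0 <= t <= Lw -> inI q (v+t) /\ ~ inS q (v+t)) ->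
  exists o, 0 <= o /\ o + Lw/q^3 <= Lw /\
   forall v, (v = v1 \/ v = v2 \/ v = v3) -> forall t, o <= t <= o + Lw/q^3 ->
     ~ inS q (it q 1 (v+t)) /\ ~ inS q (it q 2 (v+t)) /\ ~ inS q (it q 3 (v+t)).
Proof. intros Hq H.
  destruct (fam q v1 Hq (H v1 ltac:(auto))) as [b1 Hb1].
  destruct (fam q v2 Hq (H v2 ltac:(auto))) as [b2 Hb2].
  destruct (fam q v3 Hq (H v3 ltac:(auto))) as [b3 Hb3].
  assert (Hq3 : 7940/1000 <= q^3) by (simpl; nra).
  assert (Hi : /q^3 <= 1000/7940) by (replace (1000/7940) with (/(7940/1000)) by field; apply Rinv_le_contravar; lra).
  assert (Hi0 : 0 < /q^3) by (apply Rinv_0_lt_compat; lra).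
  assert (Hl : 0 <= Lw/q^3 <= Lw * (1000/7940)) by (unfold Lw, Rdiv; split; nra).
  pose proof (s_b q Hq) as Hs.
  destruct (pigeon (Lw/q^3) (sq q) ltac:(lra) ltac:(lra) 3 [b1;b2;b3] eq_refl 0 Lw) as [o [Ho1 [Ho2 Ho3]]].
  { replace (INR 4) with 4 by (simpl; lra). replace (INR 3) with 3 by (simpl; lra). unfold Lw in *. lra. }
  exists o. split; [lra|]. split; [lra|]. intros v Hv t Ht.
  assert (Ht' : 0 <= t <= Lw) by lra.
  destruct Hv as [ -> | [ -> | -> ] ].
  - apply Hb1; auto. destruct (Ho3 b1 ltac:(simpl; auto)); [left|right]; lra.
  - apply Hb2; auto. destruct (Ho3 b2 ltac:(simpl; auto)); [left|right]; lra.
  - apply Hb3; auto. destruct (Ho3 b3 ltac:(simpl; auto)); [left|right]; lra.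
Qed.

Lemma nested (P : nat -> R -> Prop) (len : nat -> R) (x0 : R) :
  P O x0 -> (forall m, 0 <= len m) ->
  (forall m x, P m x -> exists x', P (S m) x' /\ x <= x' /\ x' + len (S m) <= x + len m) ->
  exists a, x0 <= a <= x0 + len O /\ forall m, exists x, P m x /\ x <= a <= x + len m.
Proof. intros H0 Hlen Hstep.
  assert (ex : forall m x, exists x', P m x -> P (S m) x' /\ x <= x' /\ x' + len (S m) <= x + len m).
  { intros m x. destruct (classic (P m x)) as [h|h].
    - destruct (Hstep m x h) as [x' Hx']. exists x'. auto.
    - exists x. intros; contradiction. }
  set (F := fun m x => proj1_sig (constructive_indefinite_description _ (ex m x))).
  assert (HF : forall m x, P m x -> P (S m) (F m x) /\ x <= F m x /\ F m x + len (S m) <= x + len m).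
  { intros m x Hx. unfold F. destruct (constructive_indefinite_description _ _) as [x' H']. simpl. auto. }
  set (u := fix u (m : nat) : R := match m with O => x0 | S m' => F m' (u m') end).
  assert (HP : forall m, P m (u m)).
  { induction m; simpl; auto. apply HF; auto. }
  assert (Hu : forall m, u m <= u (S m) /\ u (S m) + len (S m) <= u m + len m).
  { intros m. simpl. split; apply HF; auto. }
  assert (Hgrow : Un_growing u) by (intros m; apply Hu).
  assert (Hbd : forall m, u m + len m <= x0 + len O).
  { induction m; simpl; [lra|]. pose proof (Hu m). simpl in H. lra. }
  assert (Hub : has_ub u).
  { exists (x0 + len O). intros y [m ->]. pose proof (Hbd m); pose proof (Hlen m). lra. }
  destruct (growing_cv u Hgrow Hub) as [l Hl].
  assert (Hlo : forall m, u m <= l) by (intros; apply growing_ineq; auto).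
  assert (Hhi : forall m, l <= u m + len m).
  { intros m. assert (Hn : forall n, u (n + m)%nat + len (n+m)%nat <= u m + len m).
    { induction n; [rewrite Nat.add_0_l; lra|]. pose proof (Hu (n+m)%nat). rewrite Nat.add_succ_l. lra. }
    apply (Rle_cv_lim (Un := fun n => u (n+m)%nat) (Vn := fun _ => u m + len m)).
    - intros n. pose proof (Hn n); pose proof (Hlen (n+m)%nat). lra.
    - apply CV_shift'. auto.
    - apply Un_cv_const. }
  exists l. split.
  - split; [apply (Hlo O)|apply (Hhi O)].
  - intros m. exists (u m). auto.
Qed.

Definition Good (q c1 c2 c3 : R) (m : nat) (x : R) : Prop :=
  forall c, (c = c1 \/ c = c2 \/ c = c3) -> forall y, x <= y <= x + Lw / (q^3)^m ->
    inI q (y + c) /\ forall j, (j <= 3*m)%nat -> ~ inS q (it q j (y + c)).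

Lemma game_step q c1 c2 c3 m x : 1995/1000 <= q < 2 -> Good q c1 c2 c3 m x ->
  exists x', Good q c1 c2 c3 (S m) x' /\ x <= x' /\ x' + Lw/(q^3)^(S m) <= x + Lw/(q^3)^m.
Proof. intros Hq HG. pose proof (qb1 q Hq) as Hq1.
  set (sig := (q^3)^m) in *.
  assert (Hsig : 0 < sig) by (apply pow_lt, pow_lt; lra).
  assert (Hsig' : q^(3*m) = sig) by (unfold sig; rewrite pow_mult; reflexivity).
  assert (HLw : 0 < Lw) by (unfold Lw; lra).
  assert (Haff : forall c, (c = c1 \/ c = c2 \/ c = c3) -> forall t, 0 <= t <= Lw/sig ->
            it q (3*m) ((x + c) + t) = it q (3*m) ((x+c) + 0) + q^(3*m) * (t - 0)).
  { intros c Hc. apply aff_it; auto. intros t Ht j Hj.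
    replace (x + c + t) with ((x + t) + c) by ring.
    apply (HG c Hc (x + t)); [|lia]. fold sig. lra. }
  set (V := fun c => it q (3*m) ((x + c) + 0)).
  assert (Hwin : forall v, (v = V c1 \/ v = V c2 \/ v = V c3) -> forall t, 0 <= t <= Lw ->
            inI q (v+t) /\ ~ inS q (v+t)).
  { intros v Hv t Ht.
    assert (Hc : exists c, (c = c1 \/ c = c2 \/ c = c3) /\ v = V c).
    { destruct Hv as [Hv|[Hv|Hv]]; [exists c1|exists c2|exists c3]; auto. }
    destruct Hc as [c [Hc ->]].
    assert (Ht' : 0 <= t/sig <= Lw/sig).
    { unfold Rdiv. split; [apply Rmult_le_pos; [lra|apply Rlt_le, Rinv_0_lt_compat; lra]|].
      apply Rmult_le_compat_r; [apply Rlt_le, Rinv_0_lt_compat|]; lra. }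
    assert (E : V c + t = it q (3*m) ((x+c) + t/sig)).
    { rewrite Haff by auto. unfold V. rewrite Hsig'. field. lra. }
    rewrite E. replace (x + c + t/sig) with ((x + t/sig) + c) by ring.
    destruct (HG c Hc (x + t/sig)) as [HI HS]; [fold sig; lra|].
    split; [apply it_I; auto|apply HS; lia]. }
  destruct (turn q (V c1) (V c2) (V c3) Hq Hwin) as [o [Ho1 [Ho2 Ho3]]].
  assert (Hq3 : 0 < q^3) by (apply pow_lt; lra).
  assert (Hlen : Lw / (q^3)^(S m) = (Lw/q^3)/sig).
  { replace ((q^3)^(S m)) with (q^3 * sig) by (unfold sig; reflexivity). field. split; lra. }
  exists (x + o/sig). rewrite Hlen. split; [|split].
  - intros c Hc y Hy.
    assert (Hoy : o/sig <= y - x <= o/sig + (Lw/q^3)/sig) by lra.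
    assert (Hyo : 0 <= y - x <= Lw/sig).
    { split. assert (0 <= o/sig) by (apply Rmult_le_pos; [lra|apply Rlt_le, Rinv_0_lt_compat; lra]). lra.
      assert (o/sig + (Lw/q^3)/sig <= Lw/sig) by (unfold Rdiv; rewrite <- Rmult_plus_distr_r; apply Rmult_le_compat_r; [apply Rlt_le, Rinv_0_lt_compat|]; lra). lra. }
    destruct (HG c Hc y) as [HI HS]; [fold sig; lra|].
    split; [auto|]. intros j Hj.
    destruct (Compare_dec.le_lt_dec j (3*m)) as [hj|hj]; [apply HS; auto|].
    replace j with (3*m + (j - 3*m))%nat by lia. rewrite it_add.
    assert (E : it q (3*m) (y + c) = V c + sig * (y - x)).
    { replace (y + c) with ((x + c) + (y - x)) by ring. rewrite Haff by auto. unfold V. rewrite Hsig'. ring. }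
    rewrite E.
    assert (Ht : o <= sig * (y - x) <= o + Lw/q^3).
    { split.
      - replace o with (sig * (o/sig)) by (field; lra). apply Rmult_le_compat_l; lra.
      - replace (o + Lw/q^3) with (sig * (o/sig + (Lw/q^3)/sig)) by (field; lra). apply Rmult_le_compat_l; lra. }
    assert (Hv : V c = V c1 \/ V c = V c2 \/ V c = V c3) by (destruct Hc as [ -> | [ -> | -> ] ]; auto).
    destruct (Ho3 (V c) Hv _ Ht) as [N1 [N2 N3]].
    assert (Hr : (j - 3*m = 1 \/ j - 3*m = 2 \/ j - 3*m = 3)%nat) by lia.
    destruct Hr as [ -> | [ -> | -> ] ]; auto.
  - assert (0 <= o/sig) by (apply Rmult_le_pos; [lra|apply Rlt_le, Rinv_0_lt_compat; lra]). lra.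
  - assert (o/sig + (Lw/q^3)/sig <= Lw/sig) by (unfold Rdiv; rewrite <- Rmult_plus_distr_r; apply Rmult_le_compat_r; [apply Rlt_le, Rinv_0_lt_compat|]; lra).
    unfold sig in *. lra.
Qed.

Lemma game q c1 c2 c3 x0 : 1995/1000 <= q < 2 ->
  (forall c, (c = c1 \/ c = c2 \/ c = c3) -> forall t, 0 <= t <= Lw ->
     inI q (x0 + c + t) /\ ~ inS q (x0 + c + t)) ->
  exists a, x0 <= a <= x0 + Lw /\
    forall c, (c = c1 \/ c = c2 \/ c = c3) -> forall n, ~ inS q (it q n (a + c)).
Proof. intros Hq H0.
  destruct (nested (Good q c1 c2 c3) (fun m => Lw/(q^3)^m) x0) as [a [Ha1 Ha2]].
  - intros c Hc y Hy. simpl in Hy. replace (Lw / 1) with Lw in Hy by field.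
    replace (y + c) with (x0 + c + (y - x0)) by ring.
    destruct (H0 c Hc (y - x0)) as [HI HS]; [lra|]. split; auto.
    intros j Hj. replace j with O by lia. simpl. auto.
  - intros m. unfold Lw, Rdiv. apply Rmult_le_pos; [lra|]. apply Rlt_le, Rinv_0_lt_compat, pow_lt, pow_lt; lra.
  - intros m x Hx. apply game_step; auto.
  - exists a. simpl in Ha1. replace (Lw/1) with Lw in Ha1 by field. split; auto.
    intros c Hc n. destruct (Ha2 n) as [x [Hx Hxa]].
    destruct (Hx c Hc a Hxa) as [_ HS]. apply HS. lia.
Qed.

Lemma fz q : 1 < q -> forall m y, 0 <= y -> q^m * y < 1 ->
  (forall j, (j < m)%nat -> it q j y = q^j * y /\ q^j * y < /q) /\ it q m y = q^m * y.
Proof. intros Hq. induction m; intros y Hy H.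
  - split; [intros; lia|]. simpl. ring.
  - assert (Hm : 1 <= q^m) by (apply pow_ge; lra).
    assert (Hy' : q * y < 1) by (simpl in H; nra).
    assert (HT : Tq q y = q * y) by (unfold Tq; destruct (Rlt_dec y (/q)) as [h|h]; [auto|apply inv_lt_iff in Hy'; lra]).
    destruct (IHm (q*y)) as [IH1 IH2]; [nra| simpl in H; nra|].
    split.
    + intros j Hj. destruct j.
      * simpl. split; [ring|]. apply inv_lt_iff; lra.
      * simpl. rewrite HT. destruct (IH1 j ltac:(lia)) as [h1 h2]. rewrite h1. split; [ring|]. 
        replace (q * q^j * y) with (q^j * (q*y)) by ring. auto.
    + simpl. rewrite HT, IH2. ring.
Qed.

Lemma fo q : 1 < q <= 2 -> forall m y, 0 <= /(q-1) - y -> q^m * (/(q-1) - y) < 1 ->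
  (forall j, (j < m)%nat -> it q j y = /(q-1) - q^j * (/(q-1) - y) /\ /(q*(q-1)) < it q j y) /\
  it q m y = /(q-1) - q^m * (/(q-1) - y).
Proof. intros Hq. induction m; intros y Hy H.
  - split; [intros; lia|]. simpl. ring.
  - assert (Hm : 1 <= q^m) by (apply pow_ge; lra).
    assert (Hid : /(q-1) - /q = /(q*(q-1))) by (field; lra).
    assert (Hu : q * (/(q-1) - y) < 1) by (simpl in H; nra).
    assert (Hy1 : /(q*(q-1)) < y) by (apply inv_lt_iff in Hu; lra).
    pose proof (iq_le_ir q Hq).
    assert (HT : Tq q y = q * y - 1) by (unfold Tq; destruct (Rlt_dec y (/q)) as [h|h]; [lra|auto]).
    assert (Hc : /(q-1) - (q*y - 1) = q * (/(q-1) - y)) by (field; lra).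
    destruct (IHm (q*y - 1)) as [IH1 IH2]; [rewrite Hc; nra| rewrite Hc; simpl in H; nra|].
    split.
    + intros j Hj. destruct j.
      * simpl. split; [ring|]. auto.
      * simpl. rewrite HT. destruct (IH1 j ltac:(lia)) as [h1 h2]. rewrite h1, Hc. split; [ring|].
        rewrite <- Hc. rewrite <- h1. auto.
    + simpl. rewrite HT, IH2, Hc. ring.
Qed.

Lemma avoid_transfer q m y : (forall j, (j < m)%nat -> ~ inS q (it q j y)) ->
  (forall n, ~ inS q (it q n (it q m y))) -> forall n, ~ inS q (it q n y).
Proof. intros H1 H2 n. destruct (Compare_dec.le_lt_dec m n) as [h|h]; [|auto].
  replace n with (m + (n - m))%nat by lia. rewrite it_add. auto. Qed.

Lemma lt_not_inS q y : y < /q -> ~ inS q y.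
Proof. intros H [H1 H2]. lra. Qed.
Lemma gt_not_inS q y : /(q*(q-1)) < y -> ~ inS q y.
Proof. intros H [H1 H2]. lra. Qed.

Lemma Rabs_le_b x a : Rabs x <= a -> -a <= x <= a.
Proof. unfold Rabs. destruct (Rcase_abs x); lra. Qed.

Lemma assemble (e d f : nat -> bool) (k' : nat) (b : bool) :
  (forall j, (j < k')%nat -> e (S j) = d j) -> e O = false -> e (S (k' + 0)) = b ->
  (forall i, e (S (k' + S i)) = f i) ->
  e = consb false (fun j => if (j <? k')%nat then d j else consb b f (j - k')).
Proof. intros H1 H0 Hb Hf. apply functional_extensionality. intros [|j]; [auto|]. simpl.
  destruct (j <? k')%nat eqn:Hj.
  - apply Nat.ltb_lt in Hj. auto.
  - apply Nat.ltb_ge in Hj. replace j with (k' + (j - k'))%nat at 1 by lia.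
    destruct (j - k')%nat; simpl; auto.
Qed.

Lemma main_constr q k : 1995/1000 <= q < 2 -> (1 <= k)%nat ->
  Rabs (q^k*(1 - q^k*(2-q))/(q-1)) <= 3/100 ->
  Rabs ((q^k+1)*(1 - q^k*(2-q))/(q-1)) <= 3/100 ->
  99/100 <= q^k*(2-q) <= 101/100 -> 2 <= q^k -> in_B3 q.
Proof. intros Hq Hk Hc2 Hc3 HK HX.
  pose proof (qb1 q Hq) as Hq1. pose proof (qiq q Hq) as Hiq. pose proof (qir q Hq) as Hir.
  pose proof (iq_b q Hq) as Hiqb. pose proof (ir_b q Hq) as Hirb.
  assert (Hi1 : (q-1) * /(q-1) = 1) by (field; lra).
  assert (Hi1b : 1 <= /(q-1) <= 1000/995) by (split; nra).
  assert (Hrel : /(q*(q-1)) = /q * /(q-1)) by (field; lra).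
  set (X := q^k) in *. set (K := X*(2-q)) in *.
  set (c2 := X*(1-K)/(q-1)) in *. set (c3 := (X+1)*(1-K)/(q-1)) in *.
  apply Rabs_le_b in Hc2. apply Rabs_le_b in Hc3.
  destruct (game q 0 c2 c3 (1/5) Hq) as [al [Hal Hav]].
  { intros c Hc t Ht. unfold Lw in Ht.
    assert (Hb : 17/100 <= 1/5 + c + t <= 1/4) by (destruct Hc as [ -> | [ -> | -> ] ]; lra).
    split; [unfold inI; lra|]. apply lt_not_inS. lra. }
  unfold Lw in Hal.
  assert (Hav1 : forall n, ~ inS q (it q n al)) by (intros n; rewrite <- (Rplus_0_r al); apply Hav; auto).
  assert (Hav2 : forall n, ~ inS q (it q n (al + c2))) by (intros n; apply Hav; auto).
  assert (Hav3 : forall n, ~ inS q (it q n (al + c3))) by (intros n; apply Hav; auto).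
  assert (HX0 : 0 < X) by lra.
  set (a := 1 + al/(X*X)).
  set (x := a/q).
  set (L1 := al/(X*X)).
  set (ua := /(q-1) - a).
  set (z := /(q-1) - (X/q)*ua).
  set (L3 := q*z). set (L2 := q*z - 1).
  assert (Hqk1 : q^(k-1) = X/q).
  { unfold X. destruct k as [|k']; [lia|]. replace (S k' - 1)%nat with k' by lia.
    rewrite <- tech_pow_Rmult. field. lra. }
  assert (Hq2k : q^(2*k) = X*X).
  { unfold X. replace (2*k)%nat with (k+k)%nat by lia. rewrite pow_add. reflexivity. }
  assert (EL2 : X * L2 = al + c2) by (unfold L2, z, ua, a, c2, K; field; lra).
  assert (EL3 : /(q-1) - X * (/(q-1) - L3) = al + c3) by (unfold L3, z, ua, a, c3, K; field; lra).
  assert (Eua : ua * ((q-1)*(X*X)) = X*K - al*(q-1)) by (unfold ua, a, K; field; lra).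
  assert (Hua : 0 <= ua).
  { assert (0 < (q-1)*(X*X)) by (apply Rmult_lt_0_compat; nra).
    assert (0 <= X*K - al*(q-1)) by nra.
    apply (Rmult_le_reg_r ((q-1)*(X*X))); [auto|]. rewrite Eua. lra. }
  assert (Hua2 : (X/q) * ua < 1).
  { assert (E : (X/q) * ua * (q*(q-1)*X) = X*K - al*(q-1)) by (rewrite <- Eua; field; lra).
    assert (0 < q*(q-1)*X) by (apply Rmult_lt_0_compat; nra).
    apply (Rmult_lt_reg_r (q*(q-1)*X)); [auto|]. rewrite E. nra. }
  assert (HL2a : 0 <= L2 /\ X * L2 < 1).
  { split; [|lra]. apply (Rmult_le_reg_l X); [lra|]. rewrite EL2. lra. }
  assert (EuL3 : X * (/(q-1) - L3) = K * /(q-1) - (al + c2)).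
  { rewrite <- EL2. unfold L2, L3, K. field. lra. }
  assert (HuL3 : 0 <= /(q-1) - L3 /\ X * (/(q-1) - L3) < 1).
  { split.
    - apply (Rmult_le_reg_l X); [lra|]. rewrite Rmult_0_r, EuL3. nra.
    - lra. }
  destruct (fo q Hq1 (k-1) a) as [Fa1 Fa2].
  { unfold ua in Hua. auto. }
  { rewrite Hqk1. auto. }
  assert (Ez : it q (k-1) a = z) by (rewrite Fa2, Hqk1; reflexivity).
  destruct (fz q ltac:(lra) k L2) as [F21 F22]; [tauto|tauto|].
  destruct (fo q Hq1 k L3) as [F31 F32]; [tauto|tauto|].
  destruct (fz q ltac:(lra) (2*k) L1) as [F11 F12].
  { unfold L1. apply Rmult_le_pos; [lra|]. apply Rlt_le, Rinv_0_lt_compat; nra. }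
  { rewrite Hq2k. unfold L1. field_simplify; lra. }
  assert (A1 : forall n, ~ inS q (it q n L1)).
  { apply (avoid_transfer q (2*k)).
    - intros j Hj. apply lt_not_inS. destruct (F11 j Hj) as [e h]; rewrite e; exact h.
    - rewrite F12, Hq2k. unfold L1. replace (X*X*(al/(X*X))) with al by (field; lra). auto. }
  assert (A2 : forall n, ~ inS q (it q n L2)).
  { apply (avoid_transfer q k).
    - intros j Hj. apply lt_not_inS. destruct (F21 j Hj) as [e h]; rewrite e; exact h.
    - rewrite F22. fold X. rewrite EL2. auto. }
  assert (A3 : forall n, ~ inS q (it q n L3)).
  { apply (avoid_transfer q k).
    - intros j Hj. apply gt_not_inS. destruct (F31 j Hj) as [e h]; exact h.
    - rewrite F32. fold X. rewrite EL3. auto. }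
  assert (HL1p : 0 <= L1) by (unfold L1; apply Rmult_le_pos; [lra|apply Rlt_le, Rinv_0_lt_compat; nra]).
  assert (IL1 : inI q L1).
  { split; auto. assert (L1 * (X*X) = al) by (unfold L1; field; lra).
    assert (L1 <= 1) by nra. lra. }
  assert (IL2 : inI q L2) by (split; [tauto|nra]).
  assert (IL3 : inI q L3) by (split; [unfold L2 in HL2a; unfold L3; lra|lra]).
  assert (Ia : inI q a) by (split; [unfold a; fold L1; lra| unfold ua in Hua; lra]).
  assert (Ex1 : x = (digit true + L1)/q) by (unfold x, a, L1, digit; reflexivity).
  assert (Ex0 : x = (digit false + a)/q) by (unfold x, digit; field; lra).
  assert (Ez3 : z = (digit false + L3)/q) by (unfold L3, digit; field; lra).
  assert (Ez2 : z = (digit true + L2)/q) by (unfold L2, digit; field; lra).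
  assert (Hq0 : 0 < q) by lra.
  set (E1 := consb true (Dq q L1)).
  set (E2 := consb false (fun j => if (j <? k-1)%nat then Dq q a j else consb false (Dq q L3) (j - (k-1)))).
  set (E3 := consb false (fun j => if (j <? k-1)%nat then Dq q a j else consb true (Dq q L2) (j - (k-1)))).
  assert (X1 : is_expansion q x E1).
  { rewrite Ex1. apply exp_cons; auto. apply exp_exists; auto. }
  assert (X2 : is_expansion q x E2).
  { rewrite Ex0. apply exp_cons; auto. apply exp_prefix_build; auto. rewrite Ez, Ez3.
    apply exp_cons; auto. apply exp_exists; auto. }
  assert (X3 : is_expansion q x E3).
  { rewrite Ex0. apply exp_cons; auto. apply exp_prefix_build; auto. rewrite Ez, Ez2.
    apply exp_cons; auto. apply exp_exists; auto. }
  split; [lra|]. exists x. split.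
  { destruct (exp_bounds q x E1 ltac:(lra) X1). unfold in_Iq. split; auto. unfold Rdiv. lra. }
  exists E1, E2, E3. split; [auto|]. split; [auto|]. split; [auto|].
  split. { intros H. apply (f_equal (fun f => f O)) in H. simpl in H. discriminate. }
  split. { intros H. apply (f_equal (fun f => f O)) in H. simpl in H. discriminate. }
  split. { intros H. apply (f_equal (fun f => f (S (k-1)))) in H. unfold E2, E3 in H. simpl in H.
           rewrite Nat.ltb_irrefl, Nat.sub_diag in H. simpl in H. discriminate. }
  intros e He.
  pose proof (exp_tail q x e Hq0 He) as Ht.
  destruct (e O) eqn:E0.
  - left. replace (q*x - digit true) with L1 in Ht by (unfold x, a, L1, digit; field; lra).
    pose proof (exp_unique q L1 _ Hq1 IL1 A1 Ht) as U.
    apply functional_extensionality. intros [|j]; [auto|]. unfold E1. simpl.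
    apply (f_equal (fun f => f j)) in U. exact U.
  - right. replace (q*x - digit false) with a in Ht by (unfold x, digit; field; lra).
    assert (HSa : forall j, (j < k-1)%nat -> ~ inS q (it q j a)).
    { intros j Hj. apply gt_not_inS. apply (Fa1 j Hj). }
    destruct (exp_prefix_unique q Hq1 (k-1) a _ Ia HSa Ht) as [P1 P2].
    rewrite Ez in P2.
    pose proof (exp_tail q z _ Hq0 P2) as Pt. simpl in Pt.
    destruct (e (S (k - 1 + 0))) eqn:G0.
    + right. replace (q*z - digit true) with L2 in Pt by (unfold L2, digit; ring).
      pose proof (exp_unique q L2 _ Hq1 IL2 A2 Pt) as U.
      apply assemble; auto. intros i. apply (f_equal (fun f => f i)) in U. simpl in U.
      rewrite <- U. reflexivity.
    + left. replace (q*z - digit false) with L3 in Pt by (unfold L3, digit; ring).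
      pose proof (exp_unique q L3 _ Hq1 IL3 A3 Pt) as U.
      apply assemble; auto. intros i. apply (f_equal (fun f => f i)) in U. simpl in U.
      rewrite <- U. reflexivity.
Qed.

Lemma bern n u : -1 <= u -> 1 + INR n * u <= (1+u)^n.
Proof. intros Hu. induction n.
  - simpl. lra.
  - rewrite S_INR. simpl. assert (0 <= INR n) by apply pos_INR. nra.
Qed.

Lemma bern_up n u : -1 <= u -> (1+u)^n * (1 - INR n * u) <= 1.
Proof. intros Hu. induction n.
  - simpl. lra.
  - rewrite S_INR. simpl.
    assert (0 <= (1+u)^n) by (apply pow_le; lra).
    assert (0 <= (INR n + 1) * (u*u) * (1+u)^n).
    { apply Rmult_le_pos; [apply Rmult_le_pos; [pose proof (pos_INR n); lra| nra]|auto]. }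
    replace ((1 + u) * (1 + u) ^ n * (1 - (INR n + 1) * u)) with
      ((1+u)^n * (1 - INR n * u) - (INR n + 1) * (u*u) * (1+u)^n) by ring.
    lra.
Qed.

Lemma lin_exp m : 50 * INR (m + 9) <= (199/100)^(m+9).
Proof. induction m.
  - simpl. lra.
  - replace (S m + 9)%nat with (S (m + 9)) by lia. rewrite S_INR. simpl.
    assert (9 <= INR (m+9)) by (replace 9 with (INR 9) by (simpl; lra); apply le_INR; lia).
    lra.
Qed.

Lemma numerics k qk q : (9 <= k)%nat -> 1 < qk < 2 -> qk^k * (2 - qk) = 1 ->
  Rabs (q - qk) <= / qk^(2*k+6) ->
  1995/1000 <= q < 2 /\
  Rabs (q^k*(1 - q^k*(2-q))/(q-1)) <= 3/100 /\
  Rabs ((q^k+1)*(1 - q^k*(2-q))/(q-1)) <= 3/100 /\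
  99/100 <= q^k*(2-q) <= 101/100 /\ 2 <= q^k.
Proof. intros Hk Hqk HQ Hd.
  set (Q := qk^k) in *.
  assert (Hk9 : 9 <= INR k) by (replace 9 with (INR 9) by (simpl; lra); apply le_INR; lia).
  assert (Hb : 1 + INR k * (qk - 1) <= Q).
  { unfold Q. replace qk with (1 + (qk - 1)) at 2 by ring. apply bern. lra. }
  assert (Hi : 17/9 <= qk).
  { assert ((1 + INR k * (qk-1)) * (2 - qk) <= Q * (2 - qk)) by (apply Rmult_le_compat_r; lra).
    rewrite HQ in H. destruct (Rle_lt_dec (17/9) qk) as [h|h]; [auto|exfalso].
    assert (A1 : 1 < INR k * (2 - qk)) by nra.
    assert (A2 : 0 < (qk - 1) * (INR k * (2 - qk) - 1)) by (apply Rmult_lt_0_compat; lra).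
    nra. }
  assert (HQ300 : 300 <= Q).
  { apply Rle_trans with ((17/9)^9); [simpl; lra|].
    apply Rle_trans with ((17/9)^k). apply Rle_pow; [lra|lia].
    apply pow_incr; lra. }
  assert (Hqk2 : 2 - qk = /Q) by (field_simplify_eq; [lra|lra]).
  assert (HiQ : 0 < /Q <= 1/300).
  { split. apply Rinv_0_lt_compat; lra. rewrite <- (Rmult_1_l (/Q)). unfold Rdiv.
    apply Rmult_le_compat_l; [lra|]. apply Rinv_le_contravar; lra. }
  assert (Hqk3 : 19966/10000 <= qk) by lra.
  assert (HQk : 50 * INR k <= Q).
  { apply Rle_trans with ((199/100)^k).
    - replace k with ((k - 9) + 9)%nat by lia. apply lin_exp.
    - apply pow_incr; lra. }
  assert (H6 : 62 <= qk^6).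
  { apply Rle_trans with ((19966/10000)^6); [simpl; lra|]. apply pow_incr; lra. }
  assert (Hpow : qk^(2*k+6) = Q*Q*qk^6).
  { unfold Q. rewrite pow_add. replace (2*k)%nat with (k+k)%nat by lia. rewrite pow_add. ring. }
  rewrite Hpow in Hd.
  set (P6 := qk^6) in *.
  set (D := /(Q*Q*P6)).
  assert (HD : Q*Q*P6*D = 1) by (unfold D; field; split; lra).
  assert (HD0 : 0 < D) by (unfold D; apply Rinv_0_lt_compat; apply Rmult_lt_0_compat; [nra|lra]).
  assert (HDQ : Q * D <= 1/(300*62)).
  { assert (Q*D*(Q*P6) = 1) by (rewrite <- HD; ring).
    assert (300*62 <= Q*P6) by nra. nra. }
  set (dl := q - qk) in *.
  assert (Hdl : -D <= dl <= D) by (apply Rabs_le_b; exact Hd).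
  assert (HD1 : D <= 1/(300*300*62)).
  { assert (D <= Q*D/300) by (apply (Rmult_le_reg_l 300); [lra|]; nra). lra. }
  assert (Hq : 1995/1000 <= q < 2).
  { unfold dl in Hdl. split; [lra|]. assert (D < /Q) by nra. lra. }
  split; [exact Hq|].
  set (u := dl / qk).
  assert (Hu : - D <= u <= D).
  { unfold u. assert (E : dl / qk * qk = dl) by (field; lra).
    split; apply (Rmult_le_reg_r qk); try lra; rewrite E; nra. }
  set (t := INR k * D).
  assert (Ht : Q * t <= 1/(50*62)).
  { unfold t. assert (Q*D*(Q*P6) = 1) by (rewrite <- HD; ring).
    assert (INR k * D * (Q * P6) <= Q * D * (Q*P6) / 50) by nra.
    assert (Q * (INR k * D) * (50 * P6) <= 1) by nra.
    assert (0 < Q * (INR k * D)) by (apply Rmult_lt_0_compat; [lra|nra]).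
    nra. }
  assert (Ht0 : 0 <= t <= 1/(50*62*300)).
  { split; [unfold t; nra|]. assert (300 * t <= Q * t) by (apply Rmult_le_compat_r; [unfold t; nra| lra]). lra. }
  set (w := (1 + u)^k).
  assert (Hw1 : 1 - t <= w).
  { unfold w. pose proof (bern k u ltac:(lra)). unfold t. nra. }
  assert (Hw2 : w <= 1 + 2*t).
  { pose proof (bern_up k u ltac:(lra)) as B. fold w in B.
    assert (1 - t <= 1 - INR k * u) by (unfold t; nra).
    assert (0 <= w) by (unfold w; apply pow_le; lra).
    nra. }
  assert (EX : q^k = Q * w).
  { unfold Q, w, u. replace q with (qk * (1 + dl/qk)) at 1 by (unfold dl; field; lra).
    apply Rpow_mult_distr. }
  rewrite EX.
  assert (EK : Q*w*(2-q) = w - Q*w*dl).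
  { replace (2 - q) with ((2 - qk) - dl) by (unfold dl; ring). rewrite Hqk2. field. lra. }
  rewrite EK.
  assert (E1 : Q*w*(1 - (w - Q*w*dl)) = Q*w*(1-w) + (Q*w)*(Q*w)*dl) by ring.
  assert (B1 : Rabs (Q*w*(1-w)) <= 2 * (1+2*t) * (Q*t)).
  { rewrite !Rabs_mult. rewrite (Rabs_pos_eq Q), (Rabs_pos_eq w) by lra.
    assert (Rabs (1-w) <= 2*t) by (apply Rabs_le; lra).
    assert (0 <= Q*w) by nra.
    assert (Q*w*Rabs(1-w) <= Q*w*(2*t)) by (apply Rmult_le_compat_l; lra).
    assert (0 <= (1 + 2*t - w) * (2*t*Q)) by (apply Rmult_le_pos; [lra| unfold t in *; nra]).
    nra. }
  assert (B2 : Rabs ((Q*w)*(Q*w)*dl) <= (1+2*t)*(1+2*t) / 62).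
  { rewrite Rabs_mult. rewrite Rabs_pos_eq by nra.
    assert (Rabs dl <= D) by (apply Rabs_le; lra).
    assert (Q*Q*D <= 1/62).
    { assert (Q*Q*D * P6 = 1) by (rewrite <- HD; ring). nra. }
    assert (0 <= Q*Q*(w*w)) by nra.
    assert (Q*w*(Q*w)*Rabs dl <= Q*Q*(w*w)*D) by (replace (Q*w*(Q*w)) with (Q*Q*(w*w)) by ring; apply Rmult_le_compat_l; lra).
    assert (w*w <= (1+2*t)*(1+2*t)) by nra.
    nra. }
  assert (B : Rabs (Q*w*(1 - (w - Q*w*dl))) <= 17/1000).
  { rewrite E1. eapply Rle_trans; [apply Rabs_triang|]. nra. }
  assert (Hqm : 995/1000 <= q - 1) by lra.
  assert (Hw0 : 2 <= Q*w) by nra.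
  set (M := Q*w*(1 - (w - Q*w*dl))) in *.
  split; [|split; [|split]].
  - unfold Rdiv. rewrite Rabs_mult, Rabs_inv, (Rabs_pos_eq (q-1)) by lra.
    assert (/(q-1) <= 1000/995) by (replace (1000/995) with (/(995/1000)) by field; apply Rinv_le_contravar; lra).
    assert (0 < /(q-1)) by (apply Rinv_0_lt_compat; lra).
    assert (0 <= Rabs M) by apply Rabs_pos. nra.
  - replace ((Q*w+1)*(1 - (w - Q*w*dl))/(q-1)) with ((1 + /(Q*w)) * (M/(q-1))) by (unfold M; field; split; lra).
    unfold Rdiv. rewrite !Rabs_mult, Rabs_inv, (Rabs_pos_eq (q-1)) by lra.
    assert (/(q-1) <= 1000/995) by (replace (1000/995) with (/(995/1000)) by field; apply Rinv_le_contravar; lra).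
    assert (0 < /(q-1)) by (apply Rinv_0_lt_compat; lra).
    assert (0 < /(Q*w) <= 1/2) by (split; [apply Rinv_0_lt_compat; lra| replace (1/2) with (/2) by field; apply Rinv_le_contravar; lra]).
    rewrite (Rabs_pos_eq (1 + /(Q*w))) by lra.
    assert (0 <= Rabs M) by apply Rabs_pos.
    assert (Rabs M * /(q-1) <= 17/1000 * (1000/995)) by (apply Rmult_le_compat; lra).
    nra.
  - assert (Rabs (1 - (w - Q*w*dl)) <= 17/2000).
    { assert (E : 1 - (w - Q*w*dl) = M * /(Q*w)) by (unfold M; field; lra).
      rewrite E, Rabs_mult, (Rabs_pos_eq (/(Q*w))) by (apply Rlt_le, Rinv_0_lt_compat; lra).
      assert (0 < /(Q*w) <= 1/2) by (split; [apply Rinv_0_lt_compat; lra| replace (1/2) with (/2) by field; apply Rinv_le_contravar; lra]).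
      assert (0 <= Rabs M) by apply Rabs_pos. nra. }
    apply Rabs_le_b in H. lra.
  - lra.
Qed.

Lemma gen k qk q : (9 <= k)%nat -> is_kbonacci k qk -> Rabs (q - qk) <= / qk^(2*k+6) -> in_B3 q.
Proof. intros Hk [Hqk Hsum] Hd.
  assert (G := GP_finite qk (k-1)). replace (k - 1 + 1)%nat with k in G by lia.
  rewrite <- Hsum in G.
  assert (HQ : qk^k * (2 - qk) = 1) by lra.
  destruct (numerics k qk q Hk Hqk HQ Hd) as [H1 [H2 [H3 [H4 H5]]]].
  apply (main_constr q k); auto. lia.
Qed.

Theorem theoremB :
  (forall (k : nat) (qk q : R), (10 <= k)%nat -> is_kbonacci k qk ->
     Rabs (q - qk) <= / qk ^ (2 * k + 6) -> in_B3 q) /\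
  (forall (q9 q : R), is_kbonacci 9 q9 ->
     0 < q - q9 -> q - q9 <= / q9 ^ 24 -> in_B3 q).
Proof. split.
  - intros k qk q Hk H Hd. apply (gen k qk q); auto. lia.
  - intros q9 q H H1 H2. apply (gen 9 q9 q); auto. rewrite Rabs_pos_eq by lra. exact H2.
Qed.
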